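(* Let $\mathcal U$ be a $k$-universe with $\bigcup\mathcal U\subseteq\Lambda$, $\mu$ a one-wise independent distribution on $\mathbb Z_N^k$, and $M\in\mathcal M_{\mathcal U,m}$ with $m\le|\mathcal U|$. For every $f:\mathrm{Map}(M,\mathbb Z_N^k)\to\mathbb C$ and every $b\in\mathbb Z_N^\Lambda$: if $b=[\mathbf a]$ for some $\mathbf a\in\mathcal X(M)$ then $|\langle\boldsymbol R^{\Lambda,M}_\mu[f],\chi_b\rangle|\le|\widehat f(\mathbf a)|$; and if $b\neq[\mathbf a]$ for all $\mathbf a\in\mathcal X(M)$ then $\langle\boldsymbol R^{\Lambda,M}_\mu[f],\chi_b\rangle=0$.
   Context: $N\ge2$, $\mathbb Z_N=\mathbb Z/N\mathbb Z$. A $k$-universe $\mathcal U=(U_1,\dots,U_k)$ is a tuple of finite sets of common size $|\mathcal U|$; $\mathcal M_{\mathcal U,m}$ is the set of $m$-element sets of pairwise vertex-disjoint tuples in $U_1\times\dots\times U_k$. $\mu$ one-wise independent means each coordinate marginal of $\mu$ is uniform; $\mu(\cdot)$ is its pmf. For $e=(v_1,\dots,v_k)$, $x_{|e}=(x_{v_1},\dots,x_{v_k})$. $\boldsymbol R^{\Lambda,M}_\mu[f](x)=\sum_{\xi:M\to\mathbb Z_N^k}\big(\prod_{e\in M}\mu(x_{|e}-\xi(e))\big)f(\xi)$. Inner products are $\langle g,h\rangle=\mathbb E_x[g(x)\overline{h(x)}]$ with $x$ uniform; $\chi_b(x)=\exp(\frac{2\pi\mathrm i}{N}\sum_{v\in\Lambda}b_vx_v)$.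 For $\mathbf a:M\to\mathbb Z_N^k$, $\psi_{\mathbf a}(\xi)=\prod_{e\in M}\chi_{\mathbf a(e)}(\xi(e))$ (with $\chi_t(w)=\exp(\frac{2\pi\mathrm i}{N}\sum_i t_iw_i)$ on $\mathbb Z_N^k$) and $\widehat f(\mathbf a)=\langle f,\psi_{\mathbf a}\rangle$ (expectation over uniform $\xi$). $\mathcal X(M)$ is the set of $\mathbf a:M\to\mathbb Z_N^k$ such that $\mathbf a(e)$ does not have exactly one nonzero coordinate, for every $e\in M$. For $\mathbf a:M\to\mathbb Z_N^k$, $[\mathbf a]\in\mathbb Z_N^\Lambda$ is defined by $[\mathbf a]_{v_i}=\mathbf a(e)_i$ for every $e=(v_1,\dots,v_k)\in M$ and $i\in[k]$, and $[\mathbf a]_v=0$ for vertices $v$ not covered by $M$. *)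

(* Defs.v *)
From HB Require Import structures.
From mathcomp Require Import all_boot all_order all_algebra.
From mathcomp Require Import reals trigo.
From mathcomp Require Import complex.
Set Implicit Arguments. Unset Strict Implicit. Unset Printing Implicit Defensive.
Import Order.TTheory GRing.Theory Num.Theory.
Local Open Scope ring_scope.
Local Open Scope complex_scope.

Notation vecZ N k := {ffun 'I_k -> 'Z_N}.
Notation edge L k := {ffun 'I_k -> L}.
Notation dom M := {e | e \in M}.
Notation MapM N k M := {ffun dom M -> vecZ N k}.

Section Defs.
Variables (R : realType) (N : nat) (L : finType) (k : nat).

Definition omega : R[i] :=
  Complex (cos (2 * pi / N%:R)) (sin (2 * pi / N%:R)).

(* exp(2 pi i s / N) for s in Z_N (well defined since omega^N = 1) *)
Definition eZ (s : 'Z_N) : R[i] := omega ^+ (val s).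

(* k-universe U = (U_1,...,U_k), all of common size n (= |U|) *)
Definition is_universe (U : 'I_k -> {set L}) (n : nat) : Prop :=
  forall i, #|U i| = n.

(* M in M_{U,m}: m-element set of pairwise vertex-disjoint tuples of U_1 x...x U_k *)
Definition in_matchings (U : 'I_k -> {set L}) (m : nat) (M : {set edge L k}) : Prop :=
  [/\ #|M| = m,
      (forall e, e \in M -> forall i, e i \in U i) &
      (forall e e', e \in M -> e' \in M -> forall i j, e i = e' j -> e = e' /\ i = j)].

Definition one_wise_indep (mu : vecZ N k -> R) : Prop :=
  [/\ (forall w, 0 <= mu w), \sum_(w : vecZ N k) mu w = 1 &
      (forall (i : 'I_k) (t : 'Z_N), \sum_(w : vecZ N k | w i == t) mu w = N%:R^-1)].

Definition restr (x : {ffun L -> 'Z_N}) (e : edge L k) : vecZ N k :=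
  [ffun i => x (e i)].

Definition Rop (M : {set edge L k}) (mu : vecZ N k -> R) (f : MapM N k M -> R[i])
  (x : {ffun L -> 'Z_N}) : R[i] :=
  \sum_(xi : MapM N k M)
     (\prod_(e : dom M) (mu [ffun i => restr x (val e) i - xi e i])%:C) * f xi.

Definition inner (T : finType) (g h : T -> R[i]) : R[i] :=
  (#|T|%:R)^-1 * \sum_(x : T) g x * (h x)^*.

Definition chi (b : {ffun L -> 'Z_N}) (x : {ffun L -> 'Z_N}) : R[i] :=
  eZ (\sum_(v : L) b v * x v).

Definition chik (t : vecZ N k) (w : vecZ N k) : R[i] :=
  eZ (\sum_(i : 'I_k) t i * w i).

Definition psi (M : {set edge L k}) (a : MapM N k M) (xi : MapM N k M) : R[i] :=
  \prod_(e : dom M) chik (a e) (xi e).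

Definition fhat (M : {set edge L k}) (f : MapM N k M -> R[i]) (a : MapM N k M) : R[i] :=
  inner f (psi a).

Definition XM (M : {set edge L k}) : pred (MapM N k M) :=
  fun a => [forall e, #|[set i | a e i != 0]| != 1%N].

Definition bracket (M : {set edge L k}) (a : MapM N k M) : {ffun L -> 'Z_N} :=
  [ffun v => if [pick p : dom M * 'I_k | val p.1 p.2 == v] is Some p
             then a p.1 p.2 else 0].

End Defs.
Arguments XM {N L k} M _.
Arguments chi {R N L} b x.
Arguments Rop {R N L k M} mu f x.
Arguments fhat {R N L k M} f a.
Arguments inner {R T} g h.
Arguments bracket {N L k M} a.

(* Main.v *)
Require Import Defs.
From HB Require Import structures.
From mathcomp Require Import all_boot all_order all_algebra.
From mathcomp Require Import reals trigo complex ring lra.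
Set Implicit Arguments. Unset Strict Implicit. Unset Printing Implicit Defensive.
Import Order.TTheory GRing.Theory Num.Theory.
Local Open Scope ring_scope.
Local Open Scope complex_scope.

Section Cis.
Variable R : realType.
Lemma cis_mul (x y : R) : Complex (cos x) (sin x) * Complex (cos y) (sin y)
   = Complex (cos (x + y)) (sin (x + y)).
Proof.
rewrite cosD sinD -[LHS]/(mulc _ _) /mulc; congr Complex; ring.
Qed.

Lemma cis_exp (x : R) n : Complex (cos x) (sin x) ^+ n = Complex (cos (x *+ n)) (sin (x *+ n)).
Proof.
elim: n => [|n IH]; first by rewrite expr0 mulr0n cos0 sin0.
by rewrite exprS IH cis_mul mulrS.
Qed.

Lemma geom_sum (C : comRingType) (g : C) n : (g - 1) * \sum_(i < n) g ^+ i = g ^+ n - 1.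
Proof.
elim: n => [|n IH]; first by rewrite big_ord0 expr0 mulr0 subrr.
by rewrite big_ord_recr /= mulrDr IH exprS; ring.
Qed.
End Cis.

Section EZ.
Variables (R : realType) (N : nat).
Hypothesis hN : (1 < N)%N.
Local Notation om := (omega R N).

Lemma NZ : (Zp_trunc N).+2 = N. Proof. exact: Zp_cast. Qed.

Lemma om_exp n : om ^+ n = Complex (cos ((2 * pi / N%:R) *+ n)) (sin ((2 * pi / N%:R) *+ n)).
Proof. exact: cis_exp. Qed.

Lemma omN : om ^+ N = 1.
Proof.
have N0 : (N%:R : R) != 0 by rewrite pnatr_eq0 -lt0n ltnW.
rewrite om_exp -mulr_natr mulfVK // mulr_natl cos2pi sin2pi //.
Qed.

Lemma omNZ : om ^+ (Zp_trunc N).+2 = 1.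
Proof. by rewrite NZ omN. Qed.

Lemma om_neq1 c : (0 < c < N)%N -> om ^+ c != 1.
Proof.
case/andP => c0 cN.
have N0 : (0 < N%:R :> R) by rewrite ltr0n ltnW.
rewrite om_exp; apply/negP => /eqP /(congr1 (@complex.Re R)) /= hc.
pose y : R := pi * c%:R / N%:R.
have hy : (2 * pi / N%:R) *+ c = y *+ 2.
  rewrite -mulr_natr -(mulr_natr y) /y; ring.
have ypos : 0 < y < pi.
  apply/andP; split.
    by rewrite /y divr_gt0 // mulr_gt0 // ?pi_gt0 // ltr0n.
  rewrite /y ltr_pdivrMr // ltr_pM2l ?pi_gt0 // ltr_nat.
  done.
move: hc; rewrite hy cos_mulr2n => hc.
have : sin y ^+ 2 = 0.
  have c1 : cos y ^+ 2 = 1 by move: hc; rewrite mulr2n; lra.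
  by rewrite sin2cos2 c1 subrr.
move/eqP; rewrite expf_eq0 /= => /eqP.
by move: (sin_gt0_pi ypos) => /gt_eqF /eqP.
Qed.


Local Notation eZ := (@eZ R N).

Lemma eZD (s t : 'Z_N) : eZ (s + t) = eZ s * eZ t.
Proof. by rewrite /eZ /= (expr_mod _ omNZ) exprD. Qed.

Lemma eZ0 : eZ 0 = 1.
Proof. by rewrite /eZ expr0. Qed.

Lemma eZM (c s : 'Z_N) : eZ (c * s) = eZ c ^+ s.
Proof. by rewrite /eZ /= (expr_mod _ omNZ) exprM. Qed.

Lemma eZ_sum (I : Type) (r : seq I) (P : pred I) (F : I -> 'Z_N) :
  eZ (\sum_(i <- r | P i) F i) = \prod_(i <- r | P i) eZ (F i).
Proof. exact: (big_morph eZ eZD eZ0). Qed.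

Lemma norm_om : `|om| = 1.
Proof.
apply/eqP; rewrite -sqrp_eq1 // normCK /omega.
rewrite -[_ * _]/(mulc _ _) /mulc /= eq_complex /=.
by rewrite !mulrN opprK -!expr2 cos2Dsin2 eqxx /= mulrC addNr eqxx.
Qed.

Lemma norm_eZ s : `|eZ s| = 1.
Proof. by rewrite /eZ normrX norm_om expr1n. Qed.

Lemma eZ_neq0 s : eZ s != 0.
Proof. by rewrite -normr_eq0 norm_eZ oner_eq0. Qed.

Lemma eZ_conj s : Num.conj (eZ s) = eZ (- s).
Proof.
apply: (@mulfI _ (eZ s)); first exact: eZ_neq0.
by rewrite -normCK norm_eZ expr1n -eZD subrr eZ0.
Qed.

Lemma sum_eZ (c : 'Z_N) : \sum_(s : 'Z_N) eZ (c * s) = (c == 0)%:R * N%:R.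
Proof.
under eq_bigr => s _ do rewrite eZM.
have [->|c0] := eqVneq c 0.
  rewrite eZ0 mul1r; under eq_bigr => s _ do rewrite expr1n.
  by rewrite sumr_const card_ord NZ.
rewrite mul0r.
have g1 : eZ c != 1.
  apply: om_neq1; rewrite lt0n; apply/andP; split; last first.
    by apply: leq_trans (ltn_ord c) _; rewrite NZ.
  by apply: contra c0 => /eqP h; apply/eqP/val_inj.
have := geom_sum (eZ c) (Zp_trunc N).+2.
rewrite /eZ -exprM mulnC exprM omNZ expr1n subrr => /eqP.
by rewrite mulf_eq0 subr_eq0 (negbTE g1) /= => /eqP.
Qed.

Lemma orth (I : finType) (c : {ffun I -> 'Z_N}) :
  \sum_(x : {ffun I -> 'Z_N}) eZ (\sum_i c i * x i)
   = (c == 0)%:R * (#|{ffun I -> 'Z_N}|)%:R.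
Proof.
under eq_bigr => x _ do rewrite eZ_sum.
rewrite -(bigA_distr_bigA (fun i s => eZ (c i * s))).
under eq_bigr => i _ do rewrite sum_eZ.
have [->|c0] := eqVneq c 0.
  under eq_bigr => i _ do rewrite ffunE eqxx mul1r.
  by rewrite prodr_const card_ffun card_ord NZ natrX cardE mul1r.
have [i ci] : exists i, c i != 0.
  apply/existsP; apply: contraR c0 => /existsPn h.
  by apply/eqP/ffunP => i; rewrite ffunE; move: (h i); rewrite negbK => /eqP.
by rewrite (bigD1 i) //= (negbTE ci) !mul0r.
Qed.

End EZ.
Lemma ffun_sub0 (I : finType) (G : zmodType) (w z : {ffun I -> G}) :
  ([ffun i => w i - z i] == 0) = (z == w).
Proof.
apply/eqP/eqP => [h|->].
  apply/ffunP => i; move/ffunP: h => /(_ i).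
  by rewrite !ffunE => /eqP; rewrite subr_eq0 => /eqP ->.
by apply/ffunP => i; rewrite !ffunE subrr.
Qed.


Section Main.
Variables (R : realType) (N : nat) (L : finType) (k : nat) (M : {set edge L k})
  (mu : vecZ N k -> R).
Hypothesis hN : (1 < N)%N.
Hypothesis hdisj : forall e e', e \in M -> e' \in M -> forall i j, e i = e' j -> e = e' /\ i = j.
Hypothesis hmu : one_wise_indep mu.
Local Notation D := (dom M).
Local Notation eZ := (@eZ R N).

Definition hv (p : D * 'I_k) : L := val p.1 p.2.

Lemma hv_inj : injective hv.
Proof.
move=> [e i] [e' j]; rewrite /hv /= => h.
have [h1 h2] := hdisj (valP e) (valP e') h.
by rewrite h2 (val_inj h1).
Qed.

Lemma bracketE (tau : MapM N k M) p : bracket tau (hv p) = tau p.1 p.2.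
Proof.
rewrite /bracket ffunE; case: pickP => [q /eqP hq | none].
  by rewrite (hv_inj hq).
by have := none p; rewrite eqxx.
Qed.

Lemma bracket_sum (tau : MapM N k M) (x : {ffun L -> 'Z_N}) :
  \sum_(v : L) bracket tau v * x v = \sum_(e : D) \sum_(i < k) tau e i * x (val e i).
Proof.
rewrite (bigID (fun v => v \in hv @: setT)) /=.
rewrite [X in _ + X]big1 ?addr0; last first.
  move=> v hv'; rewrite /bracket ffunE; case: pickP => [q /eqP hq|_]; last by rewrite mul0r.
  by move: hv'; rewrite -hq (imset_f hv (in_setT q)).
rewrite big_imset /=; last by move=> p q _ _; exact: hv_inj.
rewrite pair_bigA /=.
by apply: eq_big => [p|p _]; rewrite ?in_setT ?bracketE.
Qed.

Lemma bracket_inj (a a' : MapM N k M) : bracket a = bracket a' -> a = a'.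
Proof.
move=> h; apply/ffunP => e; apply/ffunP => i.
by rewrite -(bracketE a (e, i)) -(bracketE a' (e, i)) h.
Qed.

Definition cmu (t : vecZ N k) : R[i] :=
  \sum_(z : vecZ N k) (mu z)%:C * eZ (- \sum_i t i * z i).

Lemma cmu_le1 t : `|cmu t| <= 1.
Proof.
case: hmu => mu0 mu1 _.
apply: le_trans (ler_norm_sum _ _ _) _.
rewrite (eq_bigr (fun z => (mu z)%:C)); last first.
  by move=> z _; rewrite normrM norm_eZ mulr1 ger0_norm // ler0c.
by rewrite -rmorph_sum mu1.
Qed.

Lemma cmu_one (t : vecZ N k) : #|[set i | t i != 0]| = 1%N -> cmu t = 0.
Proof.
case: hmu => _ _ mum.
move/eqP/cards1P => [i hi].
have tj j : j != i -> t j = 0.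
  move=> ji; have : j \notin [set i | t i != 0] by rewrite hi in_set1.
  by rewrite in_set negbK => /eqP.
have ti : t i != 0.
  have : i \in [set i | t i != 0] by rewrite hi in_set1.
  by rewrite in_set.
rewrite /cmu (eq_bigr (fun z => (mu z)%:C * eZ (- (t i * z i)))); last first.
  move=> z _; rewrite (bigD1 i) //= big1 ?addr0 // => j hj.
  by rewrite tj ?mul0r.
rewrite (partition_big (fun z : vecZ N k => z i) predT) //=.
rewrite (eq_bigr (fun s => (N%:R^-1)%:C * eZ ((- t i) * s))); last first.
  move=> s _.
  rewrite (eq_bigr (fun z => (mu z)%:C * eZ (- (t i * s)))); last first.
    by move=> z /eqP ->.
  by rewrite -big_distrl /= -rmorph_sum mum mulNr.
by rewrite -mulr_sumr (@sum_eZ R N hN) // oppr_eq0 (negbTE ti) !mul0r mulr0.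
Qed.


Local Notation K := #|{ffun 'I_k -> 'Z_N}|.

Lemma K_neq0 : (K%:R : R[i]) != 0.
Proof. by rewrite pnatr_eq0 -lt0n; apply/card_gt0P; exists 0. Qed.

Lemma mu_inv w : (mu w)%:C = \sum_(t : vecZ N k) K%:R^-1 * cmu t * eZ (\sum_i t i * w i).
Proof.
rewrite /cmu.
rewrite (eq_bigr (fun t : vecZ N k => \sum_z K%:R^-1 * (mu z)%:C *
     eZ (\sum_i [ffun i => w i - z i] i * t i))); last first.
  move=> t _; rewrite big_distrr big_distrl /=; apply: eq_bigr => z _.
  rewrite -!mulrA -(@eZD R N hN). do 2 congr (_ * _); congr eZ.
  rewrite -sumrN -big_split /=; apply: eq_bigr => i _; rewrite ffunE.
  by rewrite mulrBl addrC mulrC [t i * _]mulrC.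
rewrite exchange_big /=.
under eq_bigr => z _ do rewrite -big_distrr /= (@orth R N hN) //.
rewrite (bigD1 w) //= big1 ?addr0; last first.
  by move=> z zw; rewrite ffun_sub0 (negbTE zw) mul0r mulr0.
rewrite ffun_sub0 eqxx mul1r mulrAC mulVf ?mul1r //.
exact: K_neq0.
Qed.

Lemma psi_conj (tau xi : MapM N k M) :
  Num.conj (psi R tau xi) = eZ (- \sum_(e : D) \sum_(i < k) tau e i * xi e i).
Proof.
rewrite /psi /chik -(@eZ_sum R N hN).
by rewrite (@eZ_conj R N hN).
Qed.

Definition Amu (tau : MapM N k M) : R[i] := \prod_(e : D) (K%:R^-1 * cmu (tau e)).

Lemma Rop_expand (f : MapM N k M -> R[i]) x : Rop mu f x =
  \sum_(xi : MapM N k M) \sum_(tau : MapM N k M)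
     Amu tau * eZ (\sum_v bracket tau v * x v) * Num.conj (psi R tau xi) * f xi.
Proof.
rewrite /Rop; apply: eq_bigr => xi _; rewrite -mulr_suml; congr (_ * _).
under eq_bigr => e _ do rewrite mu_inv.
rewrite bigA_distr_bigA /=; apply: eq_bigr => tau _.
rewrite big_split /= -mulrA; congr (_ * _).
rewrite psi_conj -(@eZD R N hN) -(@eZ_sum R N hN) bracket_sum; congr eZ.
rewrite -sumrN -big_split; apply: eq_bigr => e _ /=.
rewrite -sumrN -big_split; apply: eq_bigr => i _ /=.
by rewrite !ffunE mulrBr.
Qed.


Lemma inner_formula (f : MapM N k M -> R[i]) (b : {ffun L -> 'Z_N}) :
  inner (Rop mu f) (chi b) = \sum_(tau : MapM N k M)
     (bracket tau == b)%:R * (\prod_(e : D) cmu (tau e)) * fhat f tau.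
Proof.
pose P (tau : MapM N k M) (x : {ffun L -> 'Z_N}) :=
  eZ (\sum_v bracket tau v * x v) * eZ (- \sum_v b v * x v).
pose Q (tau xi : MapM N k M) := f xi * Num.conj (psi R tau xi).
have E1 x : Rop mu f x * Num.conj (chi b x) =
    \sum_tau \sum_xi Amu tau * P tau x * Q tau xi.
  rewrite Rop_expand big_distrl exchange_big /=; apply: eq_bigr => tau _.
  rewrite big_distrl /=; apply: eq_bigr => xi _.
  rewrite /chi (@eZ_conj R N hN) /P /Q; ring.
have Et tau : (bracket tau == b)%:R * (\prod_(e : D) cmu (tau e)) * fhat f tau =
    #|{ffun L -> 'Z_N}|%:R^-1 * \sum_x \sum_xi Amu tau * P tau x * Q tau xi.
  have hP : \sum_x P tau x = (bracket tau == b)%:R * #|{ffun L -> 'Z_N}|%:R.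
    rewrite eq_sym -(ffun_sub0 (bracket tau) b) -(@orth R N hN).
    apply: eq_bigr => x _; rewrite /P -(@eZD R N hN); congr eZ.
    rewrite -sumrN -big_split /=; apply: eq_bigr => v _.
    by rewrite ffunE mulrBl.
  have hA : \prod_(e : D) cmu (tau e) = #|MapM N k M|%:R * Amu tau.
    rewrite /Amu big_split /= prodr_const card_ffun natrX mulrA -exprMn.
    by rewrite mulfV ?K_neq0 // expr1n mul1r.
  rewrite hA /fhat /inner.
  rewrite (eq_bigr (fun x => Amu tau * P tau x * \sum_xi Q tau xi)); last first.
    by move=> x _; rewrite big_distrr.
  rewrite -big_distrl /= -big_distrr /= hP.
  have h1 : (#|MapM N k M|%:R : R[i]) != 0.
    by rewrite pnatr_eq0 -lt0n; apply/card_gt0P; exists 0.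
  have h2 : (#|{ffun L -> 'Z_N}|%:R : R[i]) != 0.
    by rewrite pnatr_eq0 -lt0n; apply/card_gt0P; exists 0.
  rewrite /Q; field; by rewrite h1 h2.
rewrite /inner (eq_bigr _ (fun x _ => E1 x)) exchange_big /= mulr_sumr.
by apply: eq_bigr => tau _; rewrite Et.
Qed.

End Main.

Local Close Scope complex_scope.

Theorem lemma6p6 (R : realType) (N : nat) (L : finType) (k n m : nat)
  (U : 'I_k -> {set L}) (mu : vecZ N k -> R) (M : {set edge L k})
  (f : MapM N k M -> R[i]) (b : {ffun L -> 'Z_N}) :
  (1 < N)%N ->
  is_universe U n ->
  one_wise_indep mu ->
  in_matchings U m M ->
  (m <= n)%N ->
  (forall a : MapM N k M, a \in XM M -> b = bracket a ->
     `|inner (Rop mu f) (chi b)| <= `|fhat f a|) /\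
  ((forall a : MapM N k M, a \in XM M -> b <> bracket a) ->
     inner (Rop mu f) (chi b) = 0).
Proof.
move=> hN _ hmu [_ _ hdisj] _.
rewrite (inner_formula mu hN hdisj f b).
split.
  move=> a aX ->.
  rewrite (bigD1 a) //= [X in _ + X]big1 ?addr0; last first.
    move=> tau ta; have [h|h] := eqVneq (bracket tau) (bracket a); last by rewrite !mul0r.
    by rewrite (bracket_inj hdisj h) eqxx in ta.
  rewrite eqxx mul1r normrM -[X in _ <= X]mul1r ler_wpM2r //.
  rewrite normr_prod; apply: prodr_ile1 => e _.
  by rewrite normr_ge0 (cmu_le1 hmu).
move=> H; apply: big1 => tau _.
have [hb|_] := eqVneq (bracket tau) b; last by rewrite !mul0r.
have : tau \notin XM M by apply/negP => hx; exact: (H tau hx (esym hb)).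
rewrite unfold_in /XM negb_forall => /existsP [e /negPn /eqP he].
by rewrite (bigD1 e) //= (cmu_one hN hmu he) mul0r mulr0 mul0r.
Qed.
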